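(* Let $X\subset\mathbb C^s$ be finite and let $A\subset\mathbb N_0^s$ be a finite set such that $\Pi_A$ is a degree reducing interpolation space for $X$. Then there exists an inner product $(\cdot,\cdot)$ on $\Pi$ such that the set of polynomials that are reduced with respect to $(\cdot,\cdot)$ and the ideal $I_X$ is exactly $\Pi_A$ (i.e. $\Pi_A=r(\Pi)$, the range of the associated reduction/normal form map).
   Context: $\Pi=\mathbb C[x_1,\dots,x_s]$, $\deg$ is total degree with $\deg 0<0$; $\Pi_j^0$ is the space of homogeneous polynomials of degree exactly $j$ (together with $0$). For $A\subset\mathbb N_0^s$, $\Pi_A$ is the span of $x^\alpha$, $\alpha\in A$. $I_X=\{p\in\Pi:p(x)=0\ \forall x\in X\}$. A subspace $\mathcal P\subseteq\Pi$ is a degree reducing interpolation space for $X$ if for every $q\in\Pi$ there is exactly one $p\in\mathcal P$ with $p|_X=q|_X$, and this $p$ satisfies $\deg p\le\deg q$. For $p\neq0$ write $p=\sum_{j=0}^{\deg p}p_j$ with $p_j\in\Pi_j^0$ its homogeneous components, and let $\Lambda(p)=p_{\deg p}$ be its leading form. Given an inner product $(\cdot,\cdot)$ on $\Pi$, a polynomial $p$ is called reduced (with respect to $(\cdot,\cdot)$ and $I_X$) if for every $j$ the component $p_j$ is orthogonal to every leading form $\Lambda(q)$ with $q\in I_X\setminus\{0\}$, $\deg q=j$. *)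

(* Defs.v *)
From HB Require Import structures.
From mathcomp Require Import all_boot all_order all_algebra.
From mathcomp Require Import finmap mpoly.
Set Implicit Arguments. Unset Strict Implicit. Unset Printing Implicit Defensive.
Import Order.TTheory GRing.Theory Num.Theory.
Local Open Scope ring_scope.

(* The complex field is modelled by an arbitrary numClosedFieldType C
   (algebraically closed field with conjugation and the induced partial order,
   e.g. algC, or complex R for a real closed R). *)

Definition inner_product (C : numClosedFieldType) (s : nat)
    (ip : {mpoly C[s]} -> {mpoly C[s]} -> C) : Prop :=
  [/\ forall (a : C) (p q r : {mpoly C[s]}), ip (a *: p + q) r = a * ip p r + ip q r,
      forall p q : {mpoly C[s]}, ip p q = (ip q p)^*
    & forall p : {mpoly C[s]}, p != 0 -> 0 < ip p p].

Definition evalpt (C : numClosedFieldType) (s : nat) (x : 'rV[C]_s)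
    (p : {mpoly C[s]}) : C := p.@[fun i => x ord0 i].

Definition in_IX (C : numClosedFieldType) (s : nat) (X : seq 'rV[C]_s)
    (p : {mpoly C[s]}) : Prop :=
  forall x, x \in X -> evalpt x p = 0.

Definition agree_on (C : numClosedFieldType) (s : nat) (X : seq 'rV[C]_s)
    (p q : {mpoly C[s]}) : Prop :=
  forall x, x \in X -> evalpt x p = evalpt x q.

(* Pi_A = span of the monomials x^alpha, alpha in A *)
Definition in_PiA (C : numClosedFieldType) (s : nat) (A : seq 'X_{1..s})
    (p : {mpoly C[s]}) : Prop :=
  {subset msupp p <= A}.

(* Degree reducing interpolation space.  Total degree is encoded by msize
   (msize p = deg p + 1, msize 0 = 0, matching deg 0 < 0). *)
Definition deg_reducing_interp (C : numClosedFieldType) (s : nat)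
    (P : {mpoly C[s]} -> Prop) (X : seq 'rV[C]_s) : Prop :=
  forall q : {mpoly C[s]},
    (exists p, [/\ P p, agree_on X p q & msize p <= msize q]%N) /\
    (forall p1 p2, P p1 -> P p2 -> agree_on X p1 q -> agree_on X p2 q -> p1 = p2).

Definition hcomp (C : numClosedFieldType) (s : nat) (j : nat)
    (p : {mpoly C[s]}) : {mpoly C[s]} :=
  pihomog (@mdeg s) j p.

Definition leadform (C : numClosedFieldType) (s : nat) (p : {mpoly C[s]})
  : {mpoly C[s]} := hcomp (msize p).-1 p.

Definition reduced (C : numClosedFieldType) (s : nat)
    (ip : {mpoly C[s]} -> {mpoly C[s]} -> C) (X : seq 'rV[C]_s)
    (p : {mpoly C[s]}) : Prop :=
  forall (j : nat) (q : {mpoly C[s]}),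
    in_IX X q -> q != 0 -> (msize q).-1 = j ->
    ip (hcomp j p) (leadform q) = 0.

(* Main.v *)
Require Import Defs.
From HB Require Import structures.
From mathcomp Require Import all_boot all_order all_algebra.
From mathcomp Require Import finmap mpoly.
From Stdlib Require Import ClassicalEpsilon.
Set Implicit Arguments. Unset Strict Implicit. Unset Printing Implicit Defensive.
Import Order.TTheory GRing.Theory Num.Theory.
Local Open Scope ring_scope.

Section S.
Variables (C : numClosedFieldType) (s : nat).
Local Notation P := {mpoly C[s]}.
Implicit Types (p q : P).

Lemma hcompE j p m : (hcomp j p)@_m = if mdeg m == j then p@_m else 0.
Proof.
rewrite /hcomp pihomogE raddf_sum /=.
under eq_bigr => m' _ do rewrite mcoeffZ mcoeffX.
rewrite -big_filter.
have [jm|jm] := eqVneq (mdeg m) j.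
  case: (boolP (m \in msupp p)) => mp.
    rewrite (bigD1_seq m) ?filter_uniq ?msupp_uniq //=; last by rewrite mem_filter jm eqxx.
    rewrite eqxx mulr1 big1 ?addr0 // => i /negbTE ->; by rewrite mulr0.
  rewrite big1_seq; first by move: mp; rewrite mcoeff_msupp negbK => /eqP ->.
  move=> i /(mem_subseq (filter_subseq _ _)) ip; case: eqP => [e|]; last by rewrite mulr0.
  by rewrite -e ip in mp.
rewrite big1_seq // => i; rewrite mem_filter => /and3P[_ /eqP ij _].
case: eqP => [e|_]; last by rewrite mulr0.
by move: jm; rewrite -e ij eqxx.
Qed.

Lemma hcomp0 j : hcomp j (0 : P) = 0.
Proof. by rewrite /hcomp linear0. Qed.

Lemma hcomp_lin j a p q : hcomp j (a *: p + q) = a *: hcomp j p + hcomp j q.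
Proof. by rewrite /hcomp linearP. Qed.

Lemma hcompB j p q : hcomp j (p - q) = hcomp j p - hcomp j q.
Proof. by rewrite /hcomp linearB. Qed.

Lemma hcomp_big j p : (msize p <= j)%N -> hcomp j p = 0.
Proof.
move=> hp; apply/mpolyP => m; rewrite hcompE mcoeff0; case: eqP => // e.
apply/eqP; rewrite -[_ == 0]negbK -mcoeff_msupp; apply: msize_mdeg_ge; by rewrite e.
Qed.

Lemma hcompK k j p : hcomp k (hcomp j p) = if k == j then hcomp j p else 0.
Proof.
apply/mpolyP => m; rewrite hcompE; case: (eqVneq k j) => [->|kj].
  by rewrite ?eqxx hcompE; case: eqP.
rewrite ?(negbTE kj) mcoeff0 hcompE; case: eqP => // e; case: eqP => // e2.
by rewrite -e e2 eqxx in kj.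
Qed.

Lemma msize_le_of p k : (forall m, m \in msupp p -> (mdeg m < k)%N) -> (msize p <= k)%N.
Proof. by move=> h; rewrite msizeE; apply/bigmax_leqP_seq => m mp _; apply: h. Qed.

Lemma msize_homog j p : hcomp j p = p -> (msize p <= j.+1)%N.
Proof.
move=> e; apply: msize_le_of => m; rewrite -e mcoeff_msupp hcompE.
by case: ifP => [/eqP -> //|_]; rewrite eqxx.
Qed.

Lemma msize_gt j p : hcomp j p != 0 -> (j < msize p)%N.
Proof. by apply: contraNT; rewrite -leqNgt => /hcomp_big ->. Qed.

Lemma sum_sup (S r : seq 'X_{1..s}) (F : 'X_{1..s} -> C) :
  uniq S -> uniq r -> {subset S <= r} -> (forall m, m \notin S -> F m = 0) ->
  \sum_(m <- r) F m = \sum_(m <- S) F m.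
Proof.
move=> uS ur sub hF.
have -> : \sum_(m <- r) F m = \sum_(m <- r | m \in S) F m.
  by rewrite [RHS]big_mkcond; apply: eq_bigr => m _; case: ifP => // /negbT /hF.
rewrite -big_filter.
apply: perm_big; apply: uniq_perm; rewrite ?filter_uniq // => m.
rewrite mem_filter; case mS: (m \in S) => //=; exact: sub.
Qed.

Definition sdot p q := \sum_(m <- msupp p) p@_m * (q@_m)^*.

Lemma sdotE p q r : uniq r -> {subset msupp p <= r} ->
  sdot p q = \sum_(m <- r) p@_m * (q@_m)^*.
Proof.
move=> ur sub; rewrite /sdot; symmetry; apply: sum_sup; rewrite ?msupp_uniq // => m.
by rewrite mcoeff_msupp negbK => /eqP ->; rewrite mul0r.
Qed.

Lemma sdot_lin a p q r : sdot (a *: p + q) r = a * sdot p r + sdot q r.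
Proof.
pose R := undup (msupp p ++ msupp q ++ msupp (a *: p + q)).
have uR : uniq R by apply: undup_uniq.
have s1 : {subset msupp p <= R} by move=> m mp; rewrite mem_undup !mem_cat mp.
have s2 : {subset msupp q <= R} by move=> m mp; rewrite mem_undup !mem_cat mp orbT.
have s3 : {subset msupp (a *: p + q) <= R}.
  by move=> m mp; rewrite mem_undup !mem_cat mp !orbT.
rewrite (sdotE _ uR s1) (sdotE _ uR s2) (sdotE _ uR s3).
rewrite mulr_sumr -big_split /=; apply: eq_bigr => m _.
by rewrite mcoeffD mcoeffZ mulrDl mulrA.
Qed.

Lemma sdot_conj p q : sdot p q = (sdot q p)^*.
Proof.
pose R := undup (msupp p ++ msupp q).
have uR : uniq R by apply: undup_uniq.
have s1 : {subset msupp p <= R} by move=> m mp; rewrite mem_undup !mem_cat mp.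
have s2 : {subset msupp q <= R} by move=> m mp; rewrite mem_undup !mem_cat mp orbT.
rewrite (sdotE _ uR s1) (sdotE _ uR s2).
rewrite rmorph_sum; apply: eq_bigr => m _.
by rewrite rmorphM /= conjCK mulrC.
Qed.

Lemma sdot0r p : sdot p 0 = 0.
Proof. by rewrite /sdot big1 // => m _; rewrite mcoeff0 conjC0 mulr0. Qed.

Lemma sdot0l p : sdot 0 p = 0.
Proof. by rewrite /sdot big1 // => m _; rewrite mcoeff0 mul0r. Qed.

Lemma sdot_ge0 p : 0 <= sdot p p.
Proof. by apply: sumr_ge0 => m _; apply: mul_conjC_ge0. Qed.

Lemma sdot_eq0 p : sdot p p = 0 -> p = 0.
Proof.
move/eqP; rewrite psumr_eq0 => [/allP h|m _]; last exact: mul_conjC_ge0.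
apply/mpolyP => m; rewrite mcoeff0; case: (boolP (m \in msupp p)) => [mp|].
  by move: (h m mp) => /=; rewrite mul_conjC_eq0 => /eqP.
by rewrite mcoeff_msupp negbK => /eqP.
Qed.

Lemma evalptL x a p q : evalpt x (a *: p + q) = a * evalpt x p + evalpt x q.
Proof. by rewrite /evalpt mevalD mevalZ. Qed.

Lemma evalptB x p q : evalpt x (p - q) = evalpt x p - evalpt x q.
Proof. by rewrite /evalpt mevalB. Qed.

Variables (X : seq 'rV[C]_s) (A : seq 'X_{1..s}).
Hypothesis HA : deg_reducing_interp (in_PiA (C := C) A) X.

Lemma PiA_lin a p q : in_PiA A p -> in_PiA A q -> in_PiA A (a *: p + q).
Proof.
move=> hp hq m /msuppD_le; rewrite mem_cat => /orP[/msuppZ_le/hp|/hq] //.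
Qed.

Lemma PiA0 : in_PiA A (0 : P).
Proof. by move=> m; rewrite mcoeff_msupp mcoeff0 eqxx. Qed.

Lemma PiA_hcomp j p : in_PiA A p -> in_PiA A (hcomp j p).
Proof.
move=> hp m; rewrite mcoeff_msupp hcompE; case: ifP => _; last by rewrite eqxx.
by rewrite -mcoeff_msupp; apply: hp.
Qed.

Definition interp q : P :=
  proj1_sig (constructive_indefinite_description _ (proj1 (HA q))).

Lemma interpP q :
  [/\ in_PiA A (interp q), agree_on X (interp q) q & (msize (interp q) <= msize q)%N].
Proof. by rewrite /interp; case: constructive_indefinite_description. Qed.

Lemma interp_uniq p q : in_PiA A p -> agree_on X p q -> interp q = p.
Proof.
move=> hp ag; have [h1 h2 _] := interpP q.
exact: (proj2 (HA q)) h1 hp h2 ag.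
Qed.

Lemma interp_id p : in_PiA A p -> interp p = p.
Proof. by move=> hp; apply: interp_uniq. Qed.

Lemma interp0 : interp 0 = 0.
Proof. exact: interp_id PiA0. Qed.

Lemma interp_lin a p q : interp (a *: p + q) = a *: interp p + interp q.
Proof.
have [h1 h2 _] := interpP p; have [k1 k2 _] := interpP q.
apply: interp_uniq; first exact: PiA_lin.
by move=> x hx; rewrite !evalptL h2 // k2.
Qed.

Lemma interp_agree q1 q2 : agree_on X q1 q2 -> interp q1 = interp q2.
Proof.
move=> ag; have [h1 h2 _] := interpP q2; apply: interp_uniq => //.
by move=> x hx; rewrite h2 // ag.
Qed.

Definition pi p := \sum_(j < msize p) hcomp j (interp (hcomp j p)).

Lemma piW N p : (msize p <= N)%N -> pi p = \sum_(j < N) hcomp j (interp (hcomp j p)).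
Proof.
move=> hN; rewrite /pi (big_ord_widen _ (fun j => hcomp j (interp (hcomp j p))) hN).
rewrite big_mkcond; apply: eq_bigr => i _; case: ifP => // /negbT.
by rewrite -leqNgt => /hcomp_big ->; rewrite interp0 hcomp0.
Qed.

Lemma pi_lin a p q : pi (a *: p + q) = a *: pi p + pi q.
Proof.
pose N := maxn (msize (a *: p + q)) (maxn (msize p) (msize q)).
rewrite (piW (N := N)) ?leq_maxl // (piW (N := N) (p := p)); last first.
  by rewrite /N (leq_trans (leq_maxl _ (msize q))) ?leq_maxr.
rewrite (piW (N := N) (p := q)); last by rewrite /N (leq_trans (leq_maxr (msize p) _)) ?leq_maxr.
rewrite scaler_sumr -big_split; apply: eq_bigr => j _.
by rewrite hcomp_lin interp_lin hcomp_lin.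
Qed.

Lemma pi_homog j h : hcomp j h = h -> pi h = hcomp j (interp h).
Proof.
move=> e; rewrite (piW (msize_homog e)) (bigD1 (Ordinal (ltnSn j))) //= e.
rewrite big1 ?addr0 // => i ne.
have nij : (i : nat) != j by apply: contra ne => /eqP ei; apply/eqP/val_inj.
by rewrite -e hcompK (negbTE nij) interp0 hcomp0.
Qed.

Lemma msize_pos q : q != 0 -> (0 < msize q)%N.
Proof. by move=> nz; rewrite lt0n msize_poly_eq0. Qed.

Lemma pi_lead q : in_IX X q -> q != 0 -> pi (leadform q) = 0.
Proof.
move=> hq nz; rewrite /leadform; set j := (msize q).-1.
have ej : msize q = j.+1 by rewrite /j prednK // msize_pos.
rewrite (pi_homog (j := j)); last by rewrite hcompK eqxx.
set r := q - hcomp j q.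
have -> : interp (hcomp j q) = interp (- r).
  apply: interp_agree => x hx.
  by rewrite /r /evalpt mevalN mevalB -/(evalpt x q) (hq x hx) sub0r opprK.
apply: hcomp_big; have [_ _ le] := interpP (- r); apply: (leq_trans le).
rewrite msizeN; apply: msize_le_of => m; rewrite /r mcoeff_msupp mcoeffB hcompE.
case: ifP => [_|/negbT ne]; first by rewrite subrr eqxx.
rewrite subr0 -mcoeff_msupp => /msize_mdeg_lt; rewrite ej ltnS leq_eqVlt.
by rewrite (negbTE ne).
Qed.

Definition ip p q := sdot (pi p) (pi q) + sdot (p - pi p) (q - pi q).

Lemma ip_inner : inner_product ip.
Proof.
split.
- move=> a p q r; rewrite /ip pi_lin.
  have -> : a *: p + q - (a *: pi p + pi q) = a *: (p - pi p) + (q - pi q).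
    by rewrite opprD addrACA scalerBr.
  by rewrite !sdot_lin mulrDr addrACA.
- by move=> p q; rewrite /ip rmorphD /= -!sdot_conj.
- move=> p nz; rewrite /ip lt0r addr_ge0 ?sdot_ge0 // andbT.
  apply/negP => /eqP/eqP; rewrite paddr_eq0 ?sdot_ge0 // => /andP[/eqP h1 /eqP h2].
  move: nz; have e1 := sdot_eq0 h1; have e2 := sdot_eq0 h2.
  by move: e2; rewrite e1 subr0 => ->; rewrite eqxx.
Qed.

Lemma ip_reduced p : reduced ip X p <-> in_PiA A p.
Proof.
split.
- move=> red m mp; set j := mdeg m; set h := hcomp j p.
  have mh : m \in msupp h by rewrite mcoeff_msupp hcompE eqxx -mcoeff_msupp.
  have hh : hcomp j h = h by rewrite hcompK eqxx.
  have eph := pi_homog hh.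
  suff: h = pi h.
    move=> e; rewrite e eph in mh; apply: (PiA_hcomp (j := j)) mh.
    by have [] := interpP h.
  apply/eqP; rewrite -subr_eq0; apply/eqP.
  set d := h - pi h.
  case: (eqVneq d 0) => // dnz.
  set q := h - interp h.
  have [i1 i2 i3] := interpP h.
  have hq : in_IX X q by move=> x hx; rewrite /q evalptB i2 // subrr.
  have hjq : hcomp j q = d by rewrite /q hcompB hh -eph.
  have qnz : q != 0 by apply: contraNneq dnz => e; rewrite -hjq e hcomp0.
  have sq : msize q = j.+1.
    apply/eqP; rewrite eqn_leq; apply/andP; split; last by apply: msize_gt; rewrite hjq.
    apply: (leq_trans (msizeD_le _ _)); rewrite msizeN geq_max msize_homog //.
    exact: (leq_trans i3 (msize_homog hh)).
  have := red j q hq qnz; rewrite sq /= => /(_ erefl).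
  have ld : leadform q = d by rewrite /leadform sq.
  rewrite ld /ip; have := pi_lead hq qnz; rewrite ld => ->.
  by rewrite sdot0r add0r subr0 => /sdot_eq0.
- move=> hp j q hq qnz _.
  have hh : hcomp j (hcomp j p) = hcomp j p by rewrite hcompK eqxx.
  rewrite /ip (pi_lead hq qnz) sdot0r add0r (pi_homog hh) interp_id ?hh ?subrr ?sdot0l //.
  exact: PiA_hcomp.
Qed.
End S.

Theorem lemma37 (C : numClosedFieldType) (s : nat) (X : seq 'rV[C]_s)
    (A : seq 'X_{1..s}) :
  deg_reducing_interp (in_PiA (C := C) A) X ->
  exists ip : {mpoly C[s]} -> {mpoly C[s]} -> C,
    inner_product ip /\ (forall p, reduced ip X p <-> in_PiA A p).
Proof.
move=> HA; exists (ip HA); split; first exact: ip_inner.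
exact: ip_reduced.
Qed.
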